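(* Let $n$ be divisible by $4$, $m=n/4$, and let $R=S\times T$ with $S\subseteq\mathcal{P}(X)$, $T\subseteq\mathcal{P}(Y)$ be a $[1,n]$-rectangle. Then \[ \big||R\cap A|-|R\cap B|\big|\le 2^{3m}. \]
   Context: $X=\{x_1,\dots,x_n\}$, $Y=\{y_1,\dots,y_n\}$, $Z=X\cup Y$, $z_i=x_i$ ($i\in[n]$), $z_i=y_{i-n}$ ($i\in[n+1,2n]$), $Z[i,j]=\{z_\ell:i\le\ell\le j\}$. $S\times T=\{U\cup V:U\in S,V\in T\}$. With $m=n/4$, intervals $I_k=Z[4(k-1)+1,4k]$, $k\in[2m]$. $\mathcal{L}=\{U\subseteq Z: |U\cap I_k|=1\ \forall k\in[2m]\}$. $A=\{U\in\mathcal{L}: |\{i\in[n]: x_i,y_i\in U\}| \text{ odd}\}$, $B=\mathcal{L}\setminus A$. *)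

(* Defs.v *)
(* Z = {z_1,...,z_2n} is modelled as 'I_(2n) with z_i <-> index i-1.
   x_i = z_i (indices 0..n-1), y_i = z_(n+i) (indices n..2n-1). *)
From mathcomp Require Import all_boot all_order all_algebra.
Set Implicit Arguments. Unset Strict Implicit. Unset Printing Implicit Defensive.

Definition Xset (n : nat) : {set 'I_(n + n)} := [set j : 'I_(n + n) | j < n].
Definition Yset (n : nat) : {set 'I_(n + n)} := [set j : 'I_(n + n) | n <= j].

(* the interval I_k = Z[4(k-1)+1, 4k] for k in [2m]; here k is 0-based: k' = k-1,
   so I_(k'+1) = {z_l : 4k'+1 <= l <= 4k'+4} = indices 4k' .. 4k'+3 *)
Definition Ival (n k : nat) : {set 'I_(n + n)} :=
  [set j : 'I_(n + n) | (4 * k <= j) && (j < 4 * k + 4)].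

Definition rectprod (n : nat) (S T : {set {set 'I_(n + n)}}) : {set {set 'I_(n + n)}} :=
  [set U :|: V | U in S, V in T].

Definition Lfam (n : nat) : {set {set 'I_(n + n)}} :=
  [set U : {set 'I_(n + n)} | [forall k : 'I_(2 * (n %/ 4)), #|U :&: Ival n k| == 1]].

Definition npairs (n : nat) (U : {set 'I_(n + n)}) : nat :=
  #|[set i : 'I_n | (lshift n i \in U) && (rshift n i \in U)]|.

Definition Afam (n : nat) : {set {set 'I_(n + n)}} :=
  [set U in Lfam n | odd (npairs U)].

Definition Bfam (n : nat) : {set {set 'I_(n + n)}} := Lfam n :\: Afam n.

(* Main.v *)
Require Import Defs.
From mathcomp Require Import all_boot all_order all_algebra zify ring lra.
Set Implicit Arguments. Unset Strict Implicit. Unset Printing Implicit Defensive.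
Import Order.TTheory GRing.Theory Num.Theory.

Lemma inIval n t (j : 'I_(n + n)) : (j \in Ival n t) = (j %/ 4 == t).
Proof. rewrite inE; apply/idP/eqP => H; lia. Qed.

Definition psi n (U : {set 'I_(n + n)}) (t : nat) : 'I_4 :=
  if [pick j in U :&: Ival n t] is Some j then inord (j %% 4) else ord0.

Lemma psi_spec n (U : {set 'I_(n + n)}) t : #|U :&: Ival n t| == 1 ->
  forall j, (j \in U) && (j \in Ival n t) = (val j == 4 * t + psi U t).
Proof.
move/cards1P => [j0 Hj0] j.
have Hj0I : j0 \in Ival n t.
  have : j0 \in U :&: Ival n t by rewrite Hj0 set11.
  by rewrite inE => /andP [].
have Hp : psi U t = inord (j0 %% 4).
  rewrite /psi; case: pickP => [j1|]; first by rewrite Hj0 inE => /eqP ->.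
  by move/(_ j0); rewrite Hj0 set11.
rewrite -in_setI Hj0 inE Hp inordK; last by rewrite ltn_pmod.
move: Hj0I; rewrite inIval => /eqP Ht.
apply/eqP/eqP => [->|/= H]; first by rewrite /=; lia.
apply: val_inj => /=; lia.
Qed.

Definition Psi n m off (U : {set 'I_(n + n)}) : {ffun 'I_m -> 'I_4} :=
  [ffun k : 'I_m => psi U (off + k)].

Definition Lg n m off (U : {set 'I_(n + n)}) :=
  [forall k : 'I_m, #|U :&: Ival n (off + k)| == 1].

Lemma Psi_inj n m off (U U' : {set 'I_(n + n)}) :
  Lg m off U -> Lg m off U' ->
  (forall j, j \in U -> 4 * off <= j < 4 * (off + m)) ->
  (forall j, j \in U' -> 4 * off <= j < 4 * (off + m)) ->
  Psi m off U = Psi m off U' -> U = U'.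
Proof.
move=> /forallP LU /forallP LU' RU RU' HP; apply/setP => j.
case: (boolP (4 * off <= j < 4 * (off + m))) => hj; last first.
  by apply/idP/idP => [/RU|/RU'] H; rewrite H in hj.
have hk : j %/ 4 - off < m by lia.
set k := Ordinal hk.
have HI : j \in Ival n (off + k) by rewrite inIval /=; apply/eqP; lia.
rewrite -[j \in U]andbT -[j \in U']andbT -{1 2}HI.
rewrite (psi_spec (LU k)) (psi_spec (LU' k)).
by move/ffunP: HP => /(_ k); rewrite !ffunE => ->.
Qed.

Lemma npairs_eq n (Hn : 4 %| n) (U V : {set 'I_(n + n)})
  (HU : U \subset Xset n) (HV : V \subset Yset n)
  (LU : Lg (n %/ 4) 0 U) (LV : Lg (n %/ 4) (n %/ 4) V) :
  npairs (U :|: V) =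
  #|[set k : 'I_(n %/ 4) | Psi (n %/ 4) 0 U k == Psi (n %/ 4) (n %/ 4) V k]|.
Proof.
move: LU LV; set m := n %/ 4 => LU LV.
have Hnm : n = 4 * m by rewrite /m; lia.
have hf : forall k : 'I_m, 4 * k + Psi m 0 U k < n.
  move=> k; have := ltn_ord (Psi m 0 U k); have := ltn_ord k; lia.
pose f k := Ordinal (hf k).
have finj : injective f.
  move=> k k' /(congr1 val) /= H; apply: val_inj => /=.
  have := ltn_ord (Psi m 0 U k); have := ltn_ord (Psi m 0 U k'); lia.
have EU : forall (i : 'I_n) (k : 'I_m), i %/ 4 = k ->
    (lshift n i \in U) = (i == 4 * k + Psi m 0 U k :> nat).
  move=> i k hik; have := psi_spec (forallP LU k) (lshift n i).
  rewrite inIval /= ffunE add0n; have -> : (i %/ 4 == k) by apply/eqP.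
  by rewrite andbT.
have EV : forall (i : 'I_n) (k : 'I_m), i %/ 4 = k ->
    (rshift n i \in V) = (n + i == 4 * (m + k) + Psi m m V k :> nat).
  move=> i k hik; have := psi_spec (forallP LV k) (rshift n i).
  rewrite inIval /= ffunE; have -> : ((n + i) %/ 4 == m + k) by apply/eqP; lia.
  by rewrite andbT.
rewrite /npairs -(card_imset _ finj); apply: eq_card => i; rewrite !inE.
have -> : (lshift n i \in V) = false.
  apply/negP => /(subsetP HV); rewrite inE /=; have := ltn_ord i; lia.
have -> : (rshift n i \in U) = false.
  apply/negP => /(subsetP HU); rewrite inE /=; lia.
rewrite orbF /=.
apply/idP/imsetP.
  have hk : i %/ 4 < m by have := ltn_ord i; lia.
  rewrite (EU i (Ordinal hk)) // (EV i (Ordinal hk)) //= => /andP [/eqP h1 /eqP h2].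
  exists (Ordinal hk); last by apply: val_inj => /=; lia.
  by rewrite inE; apply/eqP/val_inj => /=; lia.
case=> k; rewrite inE => /eqP hab ->.
have hk : f k %/ 4 = k by rewrite /=; have := ltn_ord (Psi m 0 U k); lia.
rewrite (EU _ _ hk) (EV _ _ hk) hab /=; apply/andP; split; apply/eqP.
all: by rewrite hab; lia.
Qed.

Lemma inL n (Hn : 4 %| n) (U V : {set 'I_(n + n)})
  (HU : U \subset Xset n) (HV : V \subset Yset n) :
  (U :|: V \in Lfam n) = Lg (n %/ 4) 0 U && Lg (n %/ 4) (n %/ 4) V.
Proof.
rewrite /Lfam inE; set m := n %/ 4.
have Hnm : n = 4 * m by rewrite /m; lia.
have EX : forall k, k < m -> (U :|: V) :&: Ival n k = U :&: Ival n k.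
  move=> k hk; rewrite setIUl; apply/setP => j; rewrite !inE.
  case: (boolP (j \in V)) => hj; last by rewrite orbF.
  move: (subsetP HV _ hj); rewrite inE => h.
  have -> : (4 * k <= j) && (j < 4 * k + 4) = false by apply/negbTE/negP => /andP [] /=; lia.
  by rewrite !andbF.
have EY : forall k, m <= k -> (U :|: V) :&: Ival n k = V :&: Ival n k.
  move=> k hk; rewrite setIUl; apply/setP => j; rewrite !inE.
  case: (boolP (j \in U)) => hj; last by [].
  move: (subsetP HU _ hj); rewrite inE => h.
  have -> : (4 * k <= j) && (j < 4 * k + 4) = false by apply/negbTE/negP => /andP [] /=; lia.
  by rewrite !andbF.
apply/forallP/andP => [H|[/forallP H1 /forallP H2] k].
  split; apply/forallP => k.
    have hk : k < 2 * m by have := ltn_ord k; lia.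
    by move: (H (Ordinal hk)); rewrite /= add0n EX.
  have hk : m + k < 2 * m by have := ltn_ord k; lia.
  by move: (H (Ordinal hk)); rewrite /= EY // leq_addr.
case: (ltnP k m) => hk.
  by move: (H1 (Ordinal hk)); rewrite /= add0n EX.
have hk' : k - m < m by have := ltn_ord k; lia.
by move: (H2 (Ordinal hk')); rewrite /= subnKC // EY.
Qed.

Local Open Scope ring_scope.
Definition cc (x y : 'I_4) : int := if x == y then -1 else 1.

Lemma csum (y y' : 'I_4) :
  \sum_(x : 'I_4) cc x y * cc x y' = if y == y' then 4 else 0.
Proof.
rewrite !big_ord_recl big_ord0 /cc.
by case: y y' => [[|[|[|[|?]]]] ?] [[|[|[|[|?]]]] ?].
Qed.

Definition KK m (a b : {ffun 'I_m -> 'I_4}) : int := \prod_(k < m) cc (a k) (b k).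

Lemma Ksq m (b b' : {ffun 'I_m -> 'I_4}) :
  \sum_(a : {ffun 'I_m -> 'I_4}) KK a b * KK a b' = if b == b' then 4 ^+ m else 0.
Proof.
under eq_bigr => a _ do rewrite /KK -big_split /=.
rewrite -(bigA_distr_bigA (fun k x => cc x (b k) * cc x (b' k))) /=.
under eq_bigr => k _ do rewrite csum.
case: eqP => [<-|/eqP neq].
  by under eq_bigr => k _ do rewrite eqxx; rewrite prodr_const card_ord.
have [k Hk] : exists k, b k != b' k.
  apply/existsP; apply: contraR neq => /existsPn H; apply/eqP/ffunP => k.
  by apply/eqP; move: (H k); rewrite negbK.
by rewrite (bigD1 k) //= (negbTE Hk) mul0r.
Qed.

Lemma zsq m (TT : {set {ffun 'I_m -> 'I_4}}) :
  \sum_(a : {ffun 'I_m -> 'I_4}) (\sum_(b in TT) KK a b) ^+ 2 = 4 ^+ m * #|TT|%:R.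
Proof.
under eq_bigr => a _ do rewrite expr2 big_distrl /=.
under eq_bigr => a _ do under eq_bigr => b _ do rewrite big_distrr /=.
rewrite exchange_big /=.
under eq_bigr => b _ do rewrite exchange_big /=.
under eq_bigr => b _ do under eq_bigr => b' _ do rewrite Ksq.
rewrite (eq_bigr (fun _ => 4 ^+ m)); first by rewrite sumr_const mulr_natr.
move=> b Hb; rewrite -big_mkcondr /=.
rewrite (big_pred1 b) // => x /=; rewrite eq_sym andbC; case: eqP => // ->.
by rewrite Hb.
Qed.

Lemma CS (I : finType) (A : {pred I}) (z : I -> int) :
  (\sum_(i in A) z i) ^+ 2 <= #|A|%:R * \sum_(i in A) z i ^+ 2.
Proof.
have H : 0 <= \sum_(i in A) \sum_(j in A) (z i - z j) ^+ 2.
  by apply: sumr_ge0 => i _; apply: sumr_ge0 => j _; apply: sqr_ge0.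
have E : \sum_(i in A) \sum_(j in A) (z i - z j) ^+ 2 =
   \sum_(i in A) \sum_(j in A) z i ^+ 2 - \sum_(i in A) \sum_(j in A) (z i * z j *+ 2)
   + \sum_(i in A) \sum_(j in A) z j ^+ 2.
  rewrite -sumrB -big_split /=; apply: eq_bigr => i _.
  by rewrite -sumrB -big_split /=; apply: eq_bigr => j _; rewrite sqrrB.
have h1 : \sum_(i in A) \sum_(j in A) z i ^+ 2 = #|A|%:R * \sum_(i in A) z i ^+ 2.
  rewrite mulr_sumr; apply: eq_bigr => i _; by rewrite sumr_const mulr_natl.
have h2 : \sum_(i in A) \sum_(j in A) z j ^+ 2 = #|A|%:R * \sum_(i in A) z i ^+ 2.
  by rewrite sumr_const mulr_natl.
have h3 : \sum_(i in A) \sum_(j in A) (z i * z j *+ 2) = (\sum_(i in A) z i) ^+ 2 *+ 2.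
  rewrite expr2 big_distrl -sumrMnl /=; apply: eq_bigr => i _.
  by rewrite big_distrr -sumrMnl.
move: H; rewrite E h1 h2 h3.
move: (#|A|%:R * _) ((\sum_(i in A) z i) ^+ 2) => X Y; rewrite mulr2n; lra.
Qed.

Lemma main_alg m (SS TT : {set {ffun 'I_m -> 'I_4}}) :
  `| \sum_(a in SS) \sum_(b in TT) KK a b | <= (2 ^ (3 * m))%:Z.
Proof.
set E := \sum_(a in SS) _.
have hS : (#|SS|%:R : int) <= 4 ^+ m.
  have := max_card SS; rewrite card_ffun !card_ord -(ler_nat int) natrX => /le_trans; apply.
  by [].
have hT : (#|TT|%:R : int) <= 4 ^+ m.
  have := max_card TT; rewrite card_ffun !card_ord -(ler_nat int) natrX => /le_trans; apply.
  by [].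
have h1 : E ^+ 2 <= #|SS|%:R * \sum_(a in SS) (\sum_(b in TT) KK a b) ^+ 2 := CS _ _.
have h2 : \sum_(a in SS) (\sum_(b in TT) KK a b) ^+ 2 <= 4 ^+ m * #|TT|%:R.
  rewrite -zsq [X in _ <= X](bigID (fun a => a \in SS)) /= lerDl.
  by apply: sumr_ge0 => a _; apply: sqr_ge0.
have h3 : E ^+ 2 <= (2 ^ (3 * m))%:Z ^+ 2.
  apply: (le_trans h1).
  have -> : ((2 ^ (3 * m))%:Z) ^+ 2 = 4 ^+ m * (4 ^+ m * 4 ^+ m).
    rewrite -natz natrX -exprM -!exprMn.
    have -> : (3 * m * 2 = 6 * m)%N by lia.
    by rewrite exprM.
  apply: ler_pM => //; first by apply: sumr_ge0 => a _; apply: sqr_ge0.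
  apply: (le_trans h2); apply: ler_pM => //; exact: exprn_ge0.
rewrite -ler_sqr ?nnegrE // ?normr_ge0 //.
by rewrite intr_normK.
Qed.


Lemma cardI_sum (T : finType) (R P : {set T}) :
  (#|R :&: P|%:Z) = \sum_(W in R) ((W \in P)%:R : int).
Proof.
rewrite -natz -sum1_card natr_sum.
rewrite (eq_bigl (fun W => (W \in R) && (W \in P))); last by move=> W; rewrite inE.
rewrite big_mkcondr /=; apply: eq_bigr => W _; by case: (W \in P).
Qed.

Lemma KK_sign m (a b : {ffun 'I_m -> 'I_4}) :
  KK a b = (-1) ^+ #|[set k | a k == b k]|.
Proof.
rewrite -prodr_const big_mkcond /=; apply: eq_bigr => k _; rewrite inE /cc.
by case: (a k == b k).
Qed.

Lemma capX n (U V : {set 'I_(n + n)}) :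
  U \subset Xset n -> V \subset Yset n -> (U :|: V) :&: Xset n = U.
Proof.
move=> HU HV; apply/setP => j; rewrite !inE.
case: (boolP (j \in U)) => hj /=; first by move: (subsetP HU _ hj); rewrite inE.
case: (boolP (j \in V)) => hv //=; move: (subsetP HV _ hv); rewrite inE.
by case: ltnP.
Qed.

Lemma main_aux (n : nat) (Hn : (4 %| n)%N)
  (S T : {set {set 'I_(n + n)%N}})
  (HS : forall U, U \in S -> U \subset Xset n)
  (HT : forall V, V \in T -> V \subset Yset n) :
  (`| (#|rectprod S T :&: Afam n|%:Z - #|rectprod S T :&: Bfam n|%:Z) |
     <= (2 ^ (3 * (n %/ 4)))%N%:Z)%R.
Proof.
set m := (n %/ 4)%N.
have Hnm : (n = 4 * m)%N by rewrite /m; lia.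
rewrite !cardI_sum -sumrB.
rewrite /rectprod curry_imset2X big_imset; last first.
  move=> [U V] [U' V']; rewrite !inE /= => /andP [hU hV] /andP [hU' hV'] E.
  have e1 : U = U' by rewrite -(capX (HS _ hU) (HT _ hV)) E capX //; [apply: HS|apply: HT].
  have e2 : V = V'.
    apply/setP => j; move/setP: E => /(_ j); rewrite !inE e1.
    case: (boolP (j \in U')) => hj //=.
    move: (subsetP (HS _ hU') _ hj); rewrite inE => hjn.
    case: (boolP (j \in V)) => hv; first by move: (subsetP (HT _ hV) _ hv); rewrite inE; lia.
    case: (boolP (j \in V')) => hv' //; by move: (subsetP (HT _ hV') _ hv'); rewrite inE; lia.
  by rewrite e1 e2.
rewrite (eq_bigl (fun p => (p.1 \in S) && (p.2 \in T))); last by move=> p; rewrite inE.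
rewrite (eq_bigr (fun p => ((p.1 :|: p.2 \in Afam n)%:R - (p.1 :|: p.2 \in Bfam n)%:R : int)));
  last by move=> [U V].
rewrite -(pair_big (fun U => U \in S) (fun V => V \in T)
   (fun U V => ((U :|: V \in Afam n)%:R - (U :|: V \in Bfam n)%:R : int))) /=.
pose S' := [set U in S | Lg m 0 U].
pose T' := [set V in T | Lg m m V].
have Hw : forall U V, U \in S -> V \in T ->
   (U :|: V \in Afam n)%:R - (U :|: V \in Bfam n)%:R =
   (if Lg m 0 U && Lg m m V then - KK (Psi m 0 U) (Psi m m V) else 0 : int).
  move=> U V hU hV.
  have eA : forall W, (W \in Afam n) = (W \in Lfam n) && odd (npairs W).
    by move=> W; rewrite /Afam in_set.
  have eB : forall W, (W \in Bfam n) = (W \in Lfam n) && ~~ odd (npairs W).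
    by move=> W; rewrite /Bfam in_setD eA; case: (W \in Lfam n); case: odd.
  rewrite eA eB (inL Hn (HS _ hU) (HT _ hV)).
  case: (boolP (Lg m 0 U)) => LU; case: (boolP (Lg m m V)) => LV //=.
  rewrite KK_sign -(npairs_eq Hn (HS _ hU) (HT _ hV) LU LV) -(signr_odd int).
  by case: odd.
have -> : \sum_(U in S) \sum_(V in T)
    ((U :|: V \in Afam n)%:R - (U :|: V \in Bfam n)%:R : int) =
    - \sum_(U in S') \sum_(V in T') KK (Psi m 0 U) (Psi m m V).
  rewrite -sumrN.
  rewrite [RHS](eq_bigl (fun U => (U \in S) && Lg m 0 U)); last by move=> U; rewrite inE.
  rewrite big_mkcondr /=; apply: eq_bigr => U hU.
  case: (boolP (Lg m 0 U)) => hL; last by rewrite big1 // => V hV; rewrite Hw // (negbTE hL).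
  rewrite -sumrN [RHS](eq_bigl (fun V => (V \in T) && Lg m m V)); last by move=> V; rewrite inE.
  rewrite big_mkcondr /=; apply: eq_bigr => V hV; rewrite Hw // hL /=; by case: (Lg m m V).
rewrite normrN.
have injS : {in S' &, injective (Psi m 0)}.
  move=> U U'; rewrite !inE => /andP [hU LU] /andP [hU' LU'].
  apply: Psi_inj => // j hj.
    by move: (subsetP (HS _ hU) _ hj); rewrite inE add0n; lia.
  by move: (subsetP (HS _ hU') _ hj); rewrite inE add0n; lia.
have injT : {in T' &, injective (Psi m m)}.
  move=> V V'; rewrite !inE => /andP [hV LV] /andP [hV' LV'].
  apply: Psi_inj => // j hj.
    by move: (subsetP (HT _ hV) _ hj); rewrite inE; have := ltn_ord j; lia.
  by move: (subsetP (HT _ hV') _ hj); rewrite inE; have := ltn_ord j; lia.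
under eq_bigr => U _ do rewrite -(big_imset (fun b => KK (Psi m 0 U) b) injT).
rewrite -(big_imset (fun a => \sum_(b in Psi m m @: T') KK a b) injS).
exact: main_alg.
Qed.

Local Close Scope ring_scope.

Theorem mainTheorem11 (n : nat) (Hn : 4 %| n)
  (S T : {set {set 'I_(n + n)}})
  (HS : forall U, U \in S -> U \subset Xset n)
  (HT : forall V, V \in T -> V \subset Yset n) :
  (`| (#|rectprod S T :&: Afam n|%:Z - #|rectprod S T :&: Bfam n|%:Z) |
     <= (2 ^ (3 * (n %/ 4)))%:Z)%R.
Proof. exact: main_aux. Qed.
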